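(* The quadric surface $Q$ is tangent to all five coordinate hyperplanes $x_i=0$ ($i=0,\ldots,4$) of $\mathbf{P}^4$. The points of tangency are $(0:3:3:1:1)$, $(3:0:3:1:1)$, $(3:3:0:1:1)$, $(1:1:1:0:1)$, and $(1:1:1:1:0)$.
   Context: $Q\subset\mathbf{P}^4$ is the quadric surface $l=q=0$ with $l:=x_0+x_1+x_2-3x_3-3x_4$ and $q:=x_0^2+x_1^2+x_2^2+9x_3^2-x_0x_1-x_0x_2-3x_0x_3-x_1x_2-3x_1x_3-3x_2x_3$. A surface $S\subset\mathbf{P}^4$ is tangent to a hyperplane $H$ at a point $P\in S$ if the tangent plane $T_PS$ is contained in $H$. *)

(* Defs.v *)
From HB Require Import structures.
From mathcomp Require Import all_boot all_order all_algebra.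
From mathcomp Require Import mpoly.
Set Implicit Arguments. Unset Strict Implicit. Unset Printing Implicit Defensive.
Import Order.TTheory GRing.Theory.
Local Open Scope ring_scope.

Section QuadricQ.
Variable F : fieldType.

Definition X (k : nat) : {mpoly F[5]} := 'X_(inord k).

Definition lQ : {mpoly F[5]} := X 0 + X 1 + X 2 - 3%:R * X 3 - 3%:R * X 4.

Definition qQ : {mpoly F[5]} :=
  X 0 ^+ 2 + X 1 ^+ 2 + X 2 ^+ 2 + 9%:R * X 3 ^+ 2
  - X 0 * X 1 - X 0 * X 2 - 3%:R * (X 0 * X 3)
  - X 1 * X 2 - 3%:R * (X 1 * X 3) - 3%:R * (X 2 * X 3).

Definition ev (p : {mpoly F[5]}) (x : 'rV[F]_5) : F := p.@[fun j => x 0 j].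

Definition grad (p : {mpoly F[5]}) (x : 'rV[F]_5) : 'rV[F]_5 :=
  \row_j ev (mderiv j p) x.

(* the projective point [x] (x <> 0) lies on Q = V(l, q) *)
Definition onQ (x : 'rV[F]_5) : Prop := x != 0 /\ ev lQ x = 0 /\ ev qQ x = 0.

(* Q is smooth at [x]: the Jacobian of (l, q) at x has rank 2, so the
   (projective) tangent plane T_x Q is a plane *)
Definition smoothQ (x : 'rV[F]_5) : Prop :=
  \rank (col_mx (grad lQ x) (grad qQ x)) = 2%N.

Definition in_tangent_plane (P y : 'rV[F]_5) : Prop :=
  \sum_j (grad lQ P) 0 j * y 0 j = 0 /\ \sum_j (grad qQ P) 0 j * y 0 j = 0.

(* Q is tangent to the coordinate hyperplane x_i = 0 at P : P is a point
   of Q (smooth, so that T_P Q is a plane) and T_P Q is contained in x_i = 0 *)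
Definition tangent_coord_hyp (i : 'I_5) (P : 'rV[F]_5) : Prop :=
  onQ P /\ smoothQ P /\ forall y : 'rV[F]_5, in_tangent_plane P y -> y 0 i = 0.

Definition vec5 (a0 a1 a2 a3 a4 : F) : 'rV[F]_5 :=
  \row_(j < 5) nth 0 [:: a0; a1; a2; a3; a4] j.

Definition tangency_point (i : 'I_5) : 'rV[F]_5 :=
  match val i with
  | 0%N => vec5 0 3%:R 3%:R 1 1
  | 1%N => vec5 3%:R 0 3%:R 1 1
  | 2%N => vec5 3%:R 3%:R 0 1 1
  | 3%N => vec5 1 1 1 0 1
  | _ => vec5 1 1 1 1 0
  end.

End QuadricQ.

(* Main.v *)
Require Import Defs.
From HB Require Import structures.
From mathcomp Require Import all_boot all_order all_algebra.
From mathcomp Require Import mpoly.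
From mathcomp Require Import ring.
Import GRing.Theory.
Local Open Scope ring_scope.
Section S.
Variable F : fieldType.
Lemma mderivXU (i j : 'I_5) : mderiv j ('X_i : {mpoly F[5]}) = (i == j)%:R%:MP.
Proof.
rewrite mderivX mnm1E; case: eqP => [->|_]; last by rewrite scale0r.
have ->: (U_(j)%MM - U_(j) = 0)%MM by rewrite -{1}(add0m U_(j)%MM) addmK.
by rewrite mpolyX0 scale1r.
Qed.
Lemma mderivNat (j : 'I_5) k : mderiv j (k%:R : {mpoly F[5]}) = 0.
Proof. by rewrite mderivMn -mpolyC1 mderivC mul0rn. Qed.
Lemma evNat (x : 'rV[F]_5) k : ev (k%:R) x = k%:R.
Proof. by rewrite /ev mevalMn meval1. Qed.
Lemma evX (x : 'rV[F]_5) k : ev (X F k) x = x 0 (inord k).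
Proof. by rewrite /ev /X mevalXU. Qed.
Lemma evC (x : 'rV[F]_5) c : ev c%:MP x = c.
Proof. by rewrite /ev mevalC. Qed.
Lemma evD (x : 'rV[F]_5) p q : ev (p + q) x = ev p x + ev q x.
Proof. by rewrite /ev mevalD. Qed.
Lemma evB (x : 'rV[F]_5) p q : ev (p - q) x = ev p x - ev q x.
Proof. by rewrite /ev mevalB. Qed.
Lemma evM (x : 'rV[F]_5) p q : ev (p * q) x = ev p x * ev q x.
Proof. by rewrite /ev mevalM. Qed.
Lemma eq_inord (k : nat) (j : 'I_5) : (k < 5)%N -> (inord k == j) = (k == val j).
Proof. by move=> hk; rewrite -val_eqE /= inordK. Qed.

Local Notation pp x k := (x 0 (@inord 4 k)).


Lemma grad_l (x : 'rV[F]_5) (j : 'I_5) : grad (lQ F) x 0 j = nth 0 [:: 1; 1; 1; -3%:R; -3%:R] j.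
Proof.
rewrite mxE /lQ /X !mderivB !mderivD !mderivM !mderivNat !mderivXU.
rewrite !evB !evD !evM !evC !evNat !eq_inord //.
case: j => [[|[|[|[|[|//]]]]] Hj] /=; rewrite /=; ring.
Qed.

Lemma grad_q x (j : 'I_5) : grad (qQ F) x 0 j =
  nth 0 [:: 2%:R * pp x 0 - pp x 1 - pp x 2 - 3%:R * pp x 3;
            2%:R * pp x 1 - pp x 0 - pp x 2 - 3%:R * pp x 3;
            2%:R * pp x 2 - pp x 0 - pp x 1 - 3%:R * pp x 3;
            18%:R * pp x 3 - 3%:R * pp x 0 - 3%:R * pp x 1 - 3%:R * pp x 2; 0] j.
Proof.
rewrite mxE /qQ !expr2 /X !mderivB !mderivD !mderivM !mderivNat !mderivXU.
rewrite !(evB, evD, evM, evC, evNat, evX) !eq_inord // .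
case: j => [[|[|[|[|[|//]]]]] Hj] /=; ring.
Qed.

Lemma ev_l x : ev (lQ F) x = pp x 0 + pp x 1 + pp x 2 - 3%:R * pp x 3 - 3%:R * pp x 4.
Proof. by rewrite /lQ !evB !evD !evM !evNat !evX. Qed.

Lemma ev_q x : ev (qQ F) x = pp x 0 ^+ 2 + pp x 1 ^+ 2 + pp x 2 ^+ 2 + 9%:R * pp x 3 ^+ 2
  - pp x 0 * pp x 1 - pp x 0 * pp x 2 - 3%:R * (pp x 0 * pp x 3)
  - pp x 1 * pp x 2 - 3%:R * (pp x 1 * pp x 3) - 3%:R * (pp x 2 * pp x 3).
Proof. by rewrite /qQ !expr2 !(evB, evD, evM, evNat, evX). Qed.
Lemma sum2 (f : 'I_5 -> F) a b x y : a != b ->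
  \sum_j f j * (if j == a then x else if j == b then y else 0) = f a * x + f b * y.
Proof.
move=> ab; have ba : b != a by rewrite eq_sym.
rewrite (bigD1 a) //= eqxx (bigD1 b ba) /= (negbTE ba) eqxx.
rewrite big1 ?addr0 // => j /andP [ja jb]; by rewrite (negbTE ja) (negbTE jb) mulr0.
Qed.

Lemma sum3 (f : 'I_5 -> F) i a b x y z : i != a -> i != b -> a != b ->
  \sum_j f j * (if j == i then x else if j == a then y else if j == b then z else 0)
  = f i * x + f a * y + f b * z.
Proof.
move=> ia ib ab; have ai : a != i by rewrite eq_sym.
have bi : b != i by rewrite eq_sym. have ba : b != a by rewrite eq_sym.
rewrite (bigD1 i) //= eqxx (bigD1 a ai) /= (negbTE ai) eqxx.
have bia : (b != i) && (b != a) by rewrite bi ba.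
rewrite (bigD1 b bia) /= (negbTE bi) (negbTE ba) eqxx addrA.
rewrite big1 ?addr0 ?addrA // => j /andP [/andP [ji ja] jb].
by rewrite (negbTE ja) (negbTE jb) (negbTE ji) mulr0.
Qed.

Lemma rank2 (u g : 'rV[F]_5) a b : a != b -> u 0 a * g 0 b - u 0 b * g 0 a != 0 ->
  \rank (col_mx u g) = 2%N.
Proof.
move=> ab nD; set D := u 0 a * g 0 b - u 0 b * g 0 a.
apply/eqP; change (row_free (col_mx u g)); apply/row_freeP.
exists (\matrix_(j < 5, c < 2) if c == 0 then
   (if j == a then g 0 b / D else if j == b then - g 0 a / D else 0)
   else (if j == a then - u 0 b / D else if j == b then u 0 a / D else 0)).
have nD' : D != 0 by [].
apply/matrixP => r c; rewrite !mxE.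
under eq_bigr => j _ do rewrite [X in _ * X]mxE.
case: r => [[|[|//]] Hr]; case: c => [[|[|//]] Hc].
- have -> : Ordinal Hr = lshift 1 0 by apply/val_inj.
  under eq_bigr => j _ do rewrite col_mxEu.
  rewrite /= sum2 // /D; field; exact: nD.
- have -> : Ordinal Hr = lshift 1 0 by apply/val_inj.
  under eq_bigr => j _ do rewrite col_mxEu.
  rewrite /= sum2 // /D; field; exact: nD.
- have -> : Ordinal Hr = rshift 1 0 by apply/val_inj.
  under eq_bigr => j _ do rewrite col_mxEd.
  rewrite /= sum2 // /D; field; exact: nD.
- have -> : Ordinal Hr = rshift 1 0 by apply/val_inj.
  under eq_bigr => j _ do rewrite col_mxEd.
  rewrite /= sum2 // /D; field; exact: nD.
Qed.

Lemma minor0 (u g : 'rV[F]_5) (i a b : 'I_5) : i != a -> i != b -> a != b ->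
  (forall y : 'rV[F]_5, \sum_j u 0 j * y 0 j = 0 /\ \sum_j g 0 j * y 0 j = 0 -> y 0 i = 0) ->
  u 0 a * g 0 b - u 0 b * g 0 a = 0.
Proof.
move=> ia ib ab H; apply/eqP/negPn/negP => nD.
set D := u 0 a * g 0 b - u 0 b * g 0 a in nD.
have := H (\row_j (if j == i then 1 else if j == a then
   (- u 0 i * g 0 b + u 0 b * g 0 i) / D else if j == b then
   (- u 0 a * g 0 i + g 0 a * u 0 i) / D else 0)).
rewrite mxE eqxx => H1; suff: (1:F) = 0 by move/eqP; rewrite oner_eq0.
apply: H1.
split; under eq_bigr => j _ do rewrite mxE; rewrite sum3 // /D; field; exact: nD.
Qed.

Lemma lin0 (k : nat) (a e1 e2 e3 e4 c1 c2 c3 c4 : F) : k%:R != 0 :> F ->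
  e1 = 0 -> e2 = 0 -> e3 = 0 -> e4 = 0 ->
  k%:R * a = c1 * e1 + c2 * e2 + c3 * e3 + c4 * e4 -> a = 0.
Proof.
move=> nk -> -> -> ->; rewrite !mulr0 !addr0 => /eqP; rewrite mulf_eq0 (negbTE nk).
by move/eqP.
Qed.

Lemma sum5 (f : 'I_5 -> F) : \sum_j f j =
  f (inord 0) + f (inord 1) + f (inord 2) + f (inord 3) + f (inord 4).
Proof.
rewrite !big_ord_recl big_ord0 addr0 !addrA.
by congr (_ + _ + _ + _ + _); congr f; apply/val_inj; rewrite /= inordK.
Qed.

Lemma ordE k (H : (k < 5)%N) : Ordinal H = inord k.
Proof. by apply/val_inj; rewrite /= inordK. Qed.

Lemma neq_inord k l : (k < 5)%N -> (l < 5)%N -> k != l -> (inord k : 'I_5) != inord l.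
Proof. by move=> hk hl; rewrite -val_eqE /= !inordK. Qed.

Lemma grad_l' x k : (k < 5)%N -> grad (lQ F) x 0 (inord k) = nth 0 [:: 1; 1; 1; -3%:R; -3%:R] k.
Proof. by move=> hk; rewrite grad_l inordK. Qed.

Lemma grad_q' x k : (k < 5)%N -> grad (qQ F) x 0 (inord k) =
  nth 0 [:: 2%:R * pp x 0 - pp x 1 - pp x 2 - 3%:R * pp x 3;
            2%:R * pp x 1 - pp x 0 - pp x 2 - 3%:R * pp x 3;
            2%:R * pp x 2 - pp x 0 - pp x 1 - 3%:R * pp x 3;
            18%:R * pp x 3 - 3%:R * pp x 0 - 3%:R * pp x 1 - 3%:R * pp x 2; 0] k.
Proof. by move=> hk; rewrite grad_q inordK. Qed.

Lemma ppvec a0 a1 a2 a3 a4 k : (k < 5)%N ->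
  pp (vec5 (F:=F) a0 a1 a2 a3 a4) k = nth 0 [:: a0; a1; a2; a3; a4] k.
Proof. by move=> hk; rewrite mxE inordK. Qed.

End S.

Local Notation pp x k := (x 0 (@inord 4 k)).

Lemma nzE (F : fieldType) (k : nat) (E s : F) : k%:R != 0 :> F -> s * E = k%:R -> E != 0.
Proof. by move=> nk H; apply: contra_neq nk => E0; rewrite -H E0 mulr0. Qed.

Ltac L F nz k c1 e1 c2 e2 c3 e3 c4 e4 :=
  apply/eqP; rewrite -subr_eq0; apply/eqP;
  apply: (@lin0 F k _ _ _ _ _ c1 c2 c3 c4 (nz k isT) e1 e2 e3 e4); ring.


Theorem mainTheorem13 (F : fieldType) (charF0 : [pchar F] =i pred0) :
  forall i : 'I_5,
    tangent_coord_hyp i (tangency_point F i) /\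
    (forall P : 'rV[F]_5, tangent_coord_hyp i P ->
       exists c : F, P = c *: tangency_point F i).
Proof.
have nz : forall k, (0 < k)%N -> k%:R != 0 :> F.
  by move=> k hk; rewrite ((pcharf0P F).1 charF0) -lt0n.
have Z : (0 : F) = 0 by [].
case=> [[|[|[|[|[|//]]]]] Hi]; rewrite /tangency_point /= ordE.
{
split.
  rewrite /tangent_coord_hyp /onQ; split; [split; [|split] | split].
  - apply/negP => /eqP /rowP /(_ (inord 3)); rewrite !mxE inordK //= => /eqP; rewrite oner_eq0 //.
  - rewrite ev_l !ppvec //=; ring.
  - rewrite ev_q !ppvec //=; ring.
  - apply: (@rank2 F _ _ (inord 0) (inord 4)); first by apply: neq_inord.
    rewrite !grad_l' // !grad_q' // !ppvec //=.
    apply: (@nzE F 27 _ (-1) (nz 27 isT)); ring.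
  - move=> y [Hl Hq]; rewrite !sum5 !grad_l' // !grad_q' // !ppvec //= in Hl Hq.
    L F nz 9%N (0 : F) Hl (-1 : F) Hq (0:F) Z (0:F) Z.
move=> P [[_ [HL _]] [_ Ht]]; rewrite ev_l in HL.
have m14 := @minor0 F _ _ (inord 0) (inord 1) (inord 4) (neq_inord 0 1 isT isT isT) (neq_inord 0 4 isT isT isT) (neq_inord 1 4 isT isT isT) Ht.
rewrite !grad_l' // !grad_q' // /= in m14.
have m24 := @minor0 F _ _ (inord 0) (inord 2) (inord 4) (neq_inord 0 2 isT isT isT) (neq_inord 0 4 isT isT isT) (neq_inord 2 4 isT isT isT) Ht.
rewrite !grad_l' // !grad_q' // /= in m24.
have m34 := @minor0 F _ _ (inord 0) (inord 3) (inord 4) (neq_inord 0 3 isT isT isT) (neq_inord 0 4 isT isT isT) (neq_inord 3 4 isT isT isT) Ht.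
rewrite !grad_l' // !grad_q' // /= in m34.
have d0 : pp P 0 = 0 by L F nz 27%N (-3%:R:F) m14 (-3%:R:F) m24 (-1:F) m34 (0:F) Z.
have d1 : pp P 1 - pp P 3 * 3%:R = 0 by L F nz 18%N (-9%:R:F) d0 (-1:F) m34 (1:F) m14 (-1:F) m24.
have d2 : pp P 2 - pp P 3 * 3%:R = 0 by L F nz 18%N (-9%:R:F) d0 (-1:F) m34 (-1:F) m14 (1:F) m24.
have d4 : pp P 4 - pp P 3 = 0 by L F nz 3%N (-1:F) HL (1:F) d0 (1:F) d1 (1:F) d2.
exists (pp P 3); apply/rowP => j; rewrite !mxE.
case: j => [[|[|[|[|[|//]]]]] Hj]; rewrite /= ordE.
- L F nz 1%N (1:F) d0 (0:F) Z (0:F) Z (0:F) Z.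
- L F nz 1%N (1:F) d1 (0:F) Z (0:F) Z (0:F) Z.
- L F nz 1%N (1:F) d2 (0:F) Z (0:F) Z (0:F) Z.
- L F nz 1%N (0:F) Z (0:F) Z (0:F) Z (0:F) Z.
- L F nz 1%N (1:F) d4 (0:F) Z (0:F) Z (0:F) Z.
}
{
split.
  rewrite /tangent_coord_hyp /onQ; split; [split; [|split] | split].
  - apply/negP => /eqP /rowP /(_ (inord 3)); rewrite !mxE inordK //= => /eqP; rewrite oner_eq0 //.
  - rewrite ev_l !ppvec //=; ring.
  - rewrite ev_q !ppvec //=; ring.
  - apply: (@rank2 F _ _ (inord 1) (inord 4)); first by apply: neq_inord.
    rewrite !grad_l' // !grad_q' // !ppvec //=.
    apply: (@nzE F 27 _ (-1) (nz 27 isT)); ring.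
  - move=> y [Hl Hq]; rewrite !sum5 !grad_l' // !grad_q' // !ppvec //= in Hl Hq.
    L F nz 9%N (0 : F) Hl (-1 : F) Hq (0:F) Z (0:F) Z.
move=> P [[_ [HL _]] [_ Ht]]; rewrite ev_l in HL.
have m04 := @minor0 F _ _ (inord 1) (inord 0) (inord 4) (neq_inord 1 0 isT isT isT) (neq_inord 1 4 isT isT isT) (neq_inord 0 4 isT isT isT) Ht.
rewrite !grad_l' // !grad_q' // /= in m04.
have m24 := @minor0 F _ _ (inord 1) (inord 2) (inord 4) (neq_inord 1 2 isT isT isT) (neq_inord 1 4 isT isT isT) (neq_inord 2 4 isT isT isT) Ht.
rewrite !grad_l' // !grad_q' // /= in m24.
have m34 := @minor0 F _ _ (inord 1) (inord 3) (inord 4) (neq_inord 1 3 isT isT isT) (neq_inord 1 4 isT isT isT) (neq_inord 3 4 isT isT isT) Ht.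
rewrite !grad_l' // !grad_q' // /= in m34.
have d0 : pp P 1 = 0 by L F nz 27%N (-3%:R:F) m04 (-3%:R:F) m24 (-1:F) m34 (0:F) Z.
have d1 : pp P 0 - pp P 3 * 3%:R = 0 by L F nz 18%N (-9%:R:F) d0 (-1:F) m34 (1:F) m04 (-1:F) m24.
have d2 : pp P 2 - pp P 3 * 3%:R = 0 by L F nz 18%N (-9%:R:F) d0 (-1:F) m34 (-1:F) m04 (1:F) m24.
have d4 : pp P 4 - pp P 3 = 0 by L F nz 3%N (-1:F) HL (1:F) d0 (1:F) d1 (1:F) d2.
exists (pp P 3); apply/rowP => j; rewrite !mxE.
case: j => [[|[|[|[|[|//]]]]] Hj]; rewrite /= ordE.
- L F nz 1%N (1:F) d1 (0:F) Z (0:F) Z (0:F) Z.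
- L F nz 1%N (1:F) d0 (0:F) Z (0:F) Z (0:F) Z.
- L F nz 1%N (1:F) d2 (0:F) Z (0:F) Z (0:F) Z.
- L F nz 1%N (0:F) Z (0:F) Z (0:F) Z (0:F) Z.
- L F nz 1%N (1:F) d4 (0:F) Z (0:F) Z (0:F) Z.
}
{
split.
  rewrite /tangent_coord_hyp /onQ; split; [split; [|split] | split].
  - apply/negP => /eqP /rowP /(_ (inord 3)); rewrite !mxE inordK //= => /eqP; rewrite oner_eq0 //.
  - rewrite ev_l !ppvec //=; ring.
  - rewrite ev_q !ppvec //=; ring.
  - apply: (@rank2 F _ _ (inord 2) (inord 4)); first by apply: neq_inord.
    rewrite !grad_l' // !grad_q' // !ppvec //=.
    apply: (@nzE F 27 _ (-1) (nz 27 isT)); ring.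
  - move=> y [Hl Hq]; rewrite !sum5 !grad_l' // !grad_q' // !ppvec //= in Hl Hq.
    L F nz 9%N (0 : F) Hl (-1 : F) Hq (0:F) Z (0:F) Z.
move=> P [[_ [HL _]] [_ Ht]]; rewrite ev_l in HL.
have m04 := @minor0 F _ _ (inord 2) (inord 0) (inord 4) (neq_inord 2 0 isT isT isT) (neq_inord 2 4 isT isT isT) (neq_inord 0 4 isT isT isT) Ht.
rewrite !grad_l' // !grad_q' // /= in m04.
have m14 := @minor0 F _ _ (inord 2) (inord 1) (inord 4) (neq_inord 2 1 isT isT isT) (neq_inord 2 4 isT isT isT) (neq_inord 1 4 isT isT isT) Ht.
rewrite !grad_l' // !grad_q' // /= in m14.
have m34 := @minor0 F _ _ (inord 2) (inord 3) (inord 4) (neq_inord 2 3 isT isT isT) (neq_inord 2 4 isT isT isT) (neq_inord 3 4 isT isT isT) Ht.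
rewrite !grad_l' // !grad_q' // /= in m34.
have d0 : pp P 2 = 0 by L F nz 27%N (-3%:R:F) m04 (-3%:R:F) m14 (-1:F) m34 (0:F) Z.
have d1 : pp P 0 - pp P 3 * 3%:R = 0 by L F nz 18%N (-9%:R:F) d0 (-1:F) m34 (1:F) m04 (-1:F) m14.
have d2 : pp P 1 - pp P 3 * 3%:R = 0 by L F nz 18%N (-9%:R:F) d0 (-1:F) m34 (-1:F) m04 (1:F) m14.
have d4 : pp P 4 - pp P 3 = 0 by L F nz 3%N (-1:F) HL (1:F) d0 (1:F) d1 (1:F) d2.
exists (pp P 3); apply/rowP => j; rewrite !mxE.
case: j => [[|[|[|[|[|//]]]]] Hj]; rewrite /= ordE.
- L F nz 1%N (1:F) d1 (0:F) Z (0:F) Z (0:F) Z.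
- L F nz 1%N (1:F) d2 (0:F) Z (0:F) Z (0:F) Z.
- L F nz 1%N (1:F) d0 (0:F) Z (0:F) Z (0:F) Z.
- L F nz 1%N (0:F) Z (0:F) Z (0:F) Z (0:F) Z.
- L F nz 1%N (1:F) d4 (0:F) Z (0:F) Z (0:F) Z.
}
{
split.
  rewrite /tangent_coord_hyp /onQ; split; [split; [|split] | split].
  - apply/negP => /eqP /rowP /(_ (inord 4)); rewrite !mxE inordK //= => /eqP; rewrite oner_eq0 //.
  - rewrite ev_l !ppvec //=; ring.
  - rewrite ev_q !ppvec //=; ring.
  - apply: (@rank2 F _ _ (inord 3) (inord 4)); first by apply: neq_inord.
    rewrite !grad_l' // !grad_q' // !ppvec //=.
    apply: (@nzE F 27 _ (-1) (nz 27 isT)); ring.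
  - move=> y [Hl Hq]; rewrite !sum5 !grad_l' // !grad_q' // !ppvec //= in Hl Hq.
    L F nz 9%N (0 : F) Hl (-1 : F) Hq (0:F) Z (0:F) Z.
move=> P [[_ [HL _]] [_ Ht]]; rewrite ev_l in HL.
have m04 := @minor0 F _ _ (inord 3) (inord 0) (inord 4) (neq_inord 3 0 isT isT isT) (neq_inord 3 4 isT isT isT) (neq_inord 0 4 isT isT isT) Ht.
rewrite !grad_l' // !grad_q' // /= in m04.
have m14 := @minor0 F _ _ (inord 3) (inord 1) (inord 4) (neq_inord 3 1 isT isT isT) (neq_inord 3 4 isT isT isT) (neq_inord 1 4 isT isT isT) Ht.
rewrite !grad_l' // !grad_q' // /= in m14.
have m24 := @minor0 F _ _ (inord 3) (inord 2) (inord 4) (neq_inord 3 2 isT isT isT) (neq_inord 3 4 isT isT isT) (neq_inord 2 4 isT isT isT) Ht.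
rewrite !grad_l' // !grad_q' // /= in m24.
have d1 : pp P 1 - pp P 0 = 0 by L F nz 9%N (1:F) m14 (-1:F) m04 (0:F) Z (0:F) Z.
have d2 : pp P 2 - pp P 0 = 0 by L F nz 9%N (1:F) m24 (-1:F) m04 (0:F) Z (0:F) Z.
have d3 : pp P 3 = 0 by L F nz 9%N (-1:F) m04 (-3%:R:F) d1 (-3%:R:F) d2 (0:F) Z.
have d4 : pp P 4 - pp P 0 = 0 by L F nz 3%N (-1:F) HL (1:F) d1 (1:F) d2 (-3%:R:F) d3.
exists (pp P 0); apply/rowP => j; rewrite !mxE.
case: j => [[|[|[|[|[|//]]]]] Hj]; rewrite /= ordE.
- L F nz 1%N (0:F) Z (0:F) Z (0:F) Z (0:F) Z.
- L F nz 1%N (1:F) d1 (0:F) Z (0:F) Z (0:F) Z.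
- L F nz 1%N (1:F) d2 (0:F) Z (0:F) Z (0:F) Z.
- L F nz 1%N (1:F) d3 (0:F) Z (0:F) Z (0:F) Z.
- L F nz 1%N (1:F) d4 (0:F) Z (0:F) Z (0:F) Z.
}
{
split.
  rewrite /tangent_coord_hyp /onQ; split; [split; [|split] | split].
  - apply/negP => /eqP /rowP /(_ (inord 3)); rewrite !mxE inordK //= => /eqP; rewrite oner_eq0 //.
  - rewrite ev_l !ppvec //=; ring.
  - rewrite ev_q !ppvec //=; ring.
  - apply: (@rank2 F _ _ (inord 3) (inord 4)); first by apply: neq_inord.
    rewrite !grad_l' // !grad_q' // !ppvec //=.
    apply: (@nzE F 27 _ 1 (nz 27 isT)); ring.
  - move=> y [Hl Hq]; rewrite !sum5 !grad_l' // !grad_q' // !ppvec //= in Hl Hq.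
    L F nz 9%N (-3%:R : F) Hl (-1 : F) Hq (0:F) Z (0:F) Z.
move=> P [[_ [HL _]] [_ Ht]]; rewrite ev_l in HL.
have m01 := @minor0 F _ _ (inord 4) (inord 0) (inord 1) (neq_inord 4 0 isT isT isT) (neq_inord 4 1 isT isT isT) (neq_inord 0 1 isT isT isT) Ht.
rewrite !grad_l' // !grad_q' // /= in m01.
have m02 := @minor0 F _ _ (inord 4) (inord 0) (inord 2) (neq_inord 4 0 isT isT isT) (neq_inord 4 2 isT isT isT) (neq_inord 0 2 isT isT isT) Ht.
rewrite !grad_l' // !grad_q' // /= in m02.
have m03 := @minor0 F _ _ (inord 4) (inord 0) (inord 3) (neq_inord 4 0 isT isT isT) (neq_inord 4 3 isT isT isT) (neq_inord 0 3 isT isT isT) Ht.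
rewrite !grad_l' // !grad_q' // /= in m03.
have d1 : pp P 1 - pp P 0 = 0 by L F nz 3%N (1:F) m01 (0:F) Z (0:F) Z (0:F) Z.
have d2 : pp P 2 - pp P 0 = 0 by L F nz 3%N (1:F) m02 (0:F) Z (0:F) Z (0:F) Z.
have d3 : pp P 3 - pp P 0 = 0 by L F nz 9%N (1:F) m03 (2%:R:F) m01 (2%:R:F) m02 (0:F) Z.
have d4 : pp P 4 = 0 by L F nz 3%N (-1:F) HL (1:F) d1 (1:F) d2 (-3%:R:F) d3.
exists (pp P 0); apply/rowP => j; rewrite !mxE.
case: j => [[|[|[|[|[|//]]]]] Hj]; rewrite /= ordE.
- L F nz 1%N (0:F) Z (0:F) Z (0:F) Z (0:F) Z.
- L F nz 1%N (1:F) d1 (0:F) Z (0:F) Z (0:F) Z.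
- L F nz 1%N (1:F) d2 (0:F) Z (0:F) Z (0:F) Z.
- L F nz 1%N (1:F) d3 (0:F) Z (0:F) Z (0:F) Z.
- L F nz 1%N (1:F) d4 (0:F) Z (0:F) Z (0:F) Z.
}
Qed.
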